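(* Let $Q$ be a finite connected quandle. Then $Q$ is isomorphic to $\mathrm{GAlex}(G,f)$ for some group $G$ and $f\in\mathrm{Aut}(G)$ if and only if one of the following holds: (i) $|Q|=|\mathrm{Inn}(Q)'|$; (ii) $\mathrm{Stab}_{\mathrm{Inn}(Q)'}(e)=\{1\}$ for every $e\in Q$. If either (i) or (ii) holds then both hold. Furthermore, in this case one may take $G=\mathrm{Inn}(Q)'$ and, for any $e\in Q$, $f(g)=R_e^{-1}gR_e$ for $g\in G$.
   Context: A quandle is a set with operation $*$ satisfying $a*a=a$; unique right division; $(a*b)*c=(a*c)*(b*c)$. $R_a(y)=y*a$; $\mathrm{Inn}(Q)$ is the group generated by the $R_a$, and $Q$ is connected if it acts transitively. $\mathrm{Inn}(Q)'$ is its derived (commutator) subgroup, which is normal in $\mathrm{Inn}(Q)$, so $g\mapsto R_e^{-1}gR_e$ is an automorphism of it; $\mathrm{Stab}$ denotes the stabilizer under the natural action on $Q$. $\mathrm{GAlex}(G,f)$ is the quandle on a group $G$ with $a*b=f(ab^{-1})b$. *)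

(* Defs.v *)
From HB Require Import structures.
From mathcomp Require Import all_boot all_fingroup.
Set Implicit Arguments. Unset Strict Implicit. Unset Printing Implicit Defensive.

Record quandle (Q : finType) := Quandle {
  qop : Q -> Q -> Q;
  qidem : forall a, qop a a = a;
  qdiv : forall a b, exists! x, qop x a = b;
  qdist : forall a b c, qop (qop a b) c = qop (qop a c) (qop b c)
}.

Section QuandleDefs.
Variables (Q : finType) (q : quandle Q).

Lemma qop_inj (a : Q) : injective (fun y => qop q y a).
Proof.
move=> x y Hxy; have [z [_ Hz]] := qdiv q a (qop q x a).
by rewrite -(Hz x erefl) -(Hz y (esym Hxy)).
Qed.

Definition Rop (a : Q) : {perm Q} := perm (@qop_inj a).

Definition Inn : {group {perm Q}} := <<[set Rop a | a : Q]>>%G.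

Definition Inn' : {group {perm Q}} := [~: Inn, Inn]%G.

Definition connected_quandle : bool := [transitive Inn, on [set: Q] | 'P].

Definition GAlex_iso (gT : finGroupType) (G : {set gT}) (f : gT -> gT) : Prop :=
  exists phi : Q -> gT,
    [/\ forall a, phi a \in G,
        injective phi,
        {in G, forall y, exists a, phi a = y} &
        forall a b, phi (qop q a b) = (f (phi a * (phi b)^-1) * phi b)%g].

Definition is_GAlex : Prop :=
  exists (gT : finGroupType) (G : {group gT}) (f : {perm gT}),
    f \in Aut G /\ GAlex_iso G f.

End QuandleDefs.

(* Main.v *)
Require Import Defs.
From mathcomp Require Import all_boot all_fingroup.
Set Implicit Arguments. Unset Strict Implicit. Unset Printing Implicit Defensive.
Local Open Scope group_scope.

Lemma autM (gT : finGroupType) (G : {group gT}) (u : {perm gT}) x y :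
  u \in Aut G -> x \in G -> y \in G -> u (x * y) = u x * u y.
Proof. by move=> /Aut_morphic /morphicP H Gx Gy; apply: H. Qed.

Lemma aut1 (gT : finGroupType) (G : {group gT}) (u : {perm gT}) :
  u \in Aut G -> u 1 = 1.
Proof.
move=> Au; apply: (@mulIg _ (u 1)); rewrite mul1g -(autM Au) //.
by rewrite mulg1.
Qed.

Section GAlexDir.
Variables (Q : finType) (q : quandle Q) (gT : finGroupType) (G : {group gT})
  (f : {perm gT}) (phi : Q -> gT).
Hypotheses (fA : f \in Aut G) (phiG : forall a, phi a \in G) (phiI : injective phi)
  (phiS : {in G, forall y, exists a, phi a = y})
  (phiM : forall a b, phi (qop q a b) = (f (phi a * (phi b)^-1) * phi b)%g).

Definition okp (s : {perm Q}) (u : {perm gT}) :=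
  [exists h in G, [forall x, phi (s x) == u (phi x) * h]].

Lemma okpP (s : {perm Q}) (u : {perm gT}) : reflect (exists2 h, h \in G & forall x, phi (s x) = u (phi x) * h) (okp s u).
Proof.
apply: (iffP existsP) => [[h /andP[Gh /forallP H]]|[h Gh H]].
  by exists h => // x; apply/eqP.
by exists h; rewrite Gh; apply/forallP => x; rewrite H.
Qed.

Lemma okM (s t : {perm Q}) (u v : {perm gT}) : u \in Aut G -> v \in Aut G -> okp s u -> okp t v -> okp (s * t) (u * v).
Proof.
move=> Au Av /okpP[h Gh Hs] /okpP[k Gk Ht]; apply/okpP.
exists (v h * k); first by rewrite groupM // Aut_closed.
move=> x; rewrite !permM Ht Hs (autM Av) ?mulgA //; exact: Aut_closed.
Qed.

Lemma okU (s : {perm Q}) (u v : {perm gT}) : u \in Aut G -> v \in Aut G -> okp s u -> okp s v -> u = v.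
Proof.
move=> Au Av /okpP[h Gh Hu] /okpP[k Gk Hv].
have E : forall g, g \in G -> u g * h = v g * k.
  by move=> g /phiS[a <-]; rewrite -Hu -Hv.
have hk : h = k by have := E 1 (group1 G); rewrite (aut1 Au) (aut1 Av) !mul1g.
apply/permP => g; case Gg: (g \in G).
  by apply: (@mulIg _ h); rewrite E // hk.
by rewrite (out_Aut Au) ?(out_Aut Av) ?Gg.
Qed.

Lemma okR b : okp (Rop q b) f.
Proof.
apply/okpP; exists (f (phi b)^-1 * phi b).
  by rewrite groupM ?Aut_closed ?groupV.
by move=> x; rewrite /Rop permE phiM (autM fA) ?groupV // mulgA.
Qed.

Definition Sset := [set s : {perm Q} | [exists u in <[f]>, okp s u]].

Lemma cycAut : <[f]> \subset Aut G.
Proof. by rewrite cycle_subG. Qed.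

Lemma Sgroup : group_set Sset.
Proof.
apply/group_setP; split.
  rewrite inE; apply/existsP; exists 1; rewrite group1 /=.
  by apply/okpP; exists 1 => // x; rewrite !perm1 mulg1.
move=> s t; rewrite !inE => /existsP[u /andP[fu Hu]] /existsP[v /andP[fv Hv]].
apply/existsP; exists (u * v); rewrite groupM //=.
by apply: okM => //; apply: (subsetP cycAut).
Qed.

Canonical Sgrp := Group Sgroup.

Lemma InnS : Inn q \subset Sgrp.
Proof.
rewrite gen_subG; apply/subsetP => s /imsetP[b _ ->].
by rewrite inE; apply/existsP; exists f; rewrite cycle_id okR.
Qed.

Lemma ok1_of_Inn' s : s \in Inn' q -> okp s 1.
Proof.
have T1 : group_set [set s : {perm Q} | okp s 1].
  apply/group_setP; split.
    by rewrite inE; apply/okpP; exists 1 => // x; rewrite !perm1 mulg1.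
  move=> x y; rewrite !inE => Hx Hy; rewrite -(mulg1 1).
  by apply: okM; rewrite ?group1.
move=> Ds; suff: s \in Group T1 by rewrite inE.
move: s Ds; apply/subsetP; rewrite gen_subG.
apply/subsetP => r /imset2P[x y Ix Iy ->]; rewrite inE.
have aut u : u \in <[f]> -> u \in Aut G by move=> /(subsetP cycAut).
have := subsetP InnS _ Ix; rewrite inE => /existsP[u /andP[fu Hu]].
have := subsetP InnS _ Iy; rewrite inE => /existsP[v /andP[fv Hv]].
have Ir : [~ x, y] \in Inn q by rewrite groupR.
have := subsetP InnS _ Ir; rewrite inE => /existsP[w /andP[fw Hw]].
have H1 := okM (aut _ fv) (aut _ fu) Hv Hu.
have H2 := okM (groupM (aut _ fv) (aut _ fu)) (aut _ fw) H1 Hw.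
rewrite -commgC in H2.
have H3 := okM (aut _ fu) (aut _ fv) Hu Hv.
have cuv : u * v = v * u by apply: (centsP (cycle_abelian f)).
have := okU (groupM (groupM (aut _ fv) (aut _ fu)) (aut _ fw)) (groupM (aut _ fu) (aut _ fv)) H2 H3.
rewrite cuv => /eqP; rewrite -{2}(mulg1 (v * u)) (inj_eq (mulgI _)) => /eqP w1.
by rewrite -w1.
Qed.

Lemma stab_triv e : 'C_(Inn' q)[e | 'P] = 1.
Proof.
apply/trivgP/subsetP => s; rewrite inE => /andP[Ds /astab1P]; rewrite /= /aperm => se.
have /okpP[h _ H] := ok1_of_Inn' Ds.
have h1 : h = 1.
  by apply: (mulgI (phi e)); rewrite mulg1 -{1}(perm1 (phi e)) -H se.
rewrite inE; apply/eqP/permP => x; rewrite perm1; apply: phiI.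
by rewrite H h1 perm1 mulg1.
Qed.

End GAlexDir.
Section Conn.
Variables (Q : finType) (q : quandle Q).

Lemma RopE a y : Rop q a y = qop q y a.
Proof. by rewrite permE. Qed.

Lemma InnAut h : h \in Inn q -> forall x y, h (qop q x y) = qop q (h x) (h y).
Proof.
move=> Ih.
have G : group_set [set s : {perm Q} | [forall x, forall y, s (qop q x y) == qop q (s x) (s y)]].
  apply/group_setP; split.
    by rewrite inE; apply/forallP => x; apply/forallP => y; rewrite !perm1.
  move=> s t; rewrite !inE => /forallP Hs /forallP Ht.
  apply/forallP => x; apply/forallP => y; rewrite !permM.
  by rewrite (eqP (forallP (Hs x) y)) (eqP (forallP (Ht _) _)).
suff: h \in Group G.
  rewrite inE => /forallP H x y; apply/eqP; exact: (forallP (H x) y).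
move: h Ih; apply/subsetP; rewrite gen_subG; apply/subsetP => s /imsetP[b _ ->].
rewrite inE; apply/forallP => x; apply/forallP => y; rewrite !permE /=.
by rewrite qdist.
Qed.

Lemma DsubI : Inn' q \subset Inn q.
Proof. exact: der1_subG. Qed.

Lemma nID : Inn q \subset 'N(Inn' q).
Proof. exact: normsR (normG _) (normG _). Qed.

Lemma Rconj e h : h \in Inn q -> Rop q (h e) = Rop q e ^ h.
Proof.
move=> Ih; apply/permP => y; rewrite conjgE !permM !RopE.
by rewrite InnAut // permKV.
Qed.

Hypothesis conn : connected_quandle q.

Lemma Dtrans e x : exists2 d, d \in Inn' q & x = d e.
Proof.
have tr := atransP2 conn.
have nRD : <[Rop q e]> \subset 'N(Inn' q).
  by rewrite cycle_subG (subsetP nID) // mem_gen // imset_f.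
have IK : Inn q \subset <[Rop q e]> <*> Inn' q.
  rewrite gen_subG; apply/subsetP => s /imsetP[c _ ->].
  have [h Ih ->] := tr e c (in_setT _) (in_setT _).
  rewrite /= /aperm Rconj // -(mulKVg (Rop q e) (Rop q e ^ h)) -commgEl.
  rewrite groupM //; first by rewrite (subsetP (joing_subl _ _)) // cycle_id.
  rewrite (subsetP (joing_subr _ _)) // mem_commg // mem_gen // imset_f //.
have [h Ih ->] := tr e x (in_setT _) (in_setT _).
have := subsetP IK _ Ih; rewrite norm_joinEl // => /mulsgP[r d Rr Dd ->].
exists d => //; rewrite /= /aperm permM.
suff: r \in 'C[e | 'P] by move/astab1P => /=; rewrite /aperm => ->.
move: r Rr; apply/subsetP; rewrite cycle_subG; apply/astab1P.
by rewrite /= /aperm permE /= qidem.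
Qed.

Lemma card_stab e : (#|Q| * #|'C_(Inn' q)[e | 'P]|)%N = #|Inn' q|.
Proof.
rewrite -(card_orbit_stab 'P (Inn' q) e) -cardsT.
have -> : orbit 'P (Inn' q) e = [set: Q].
  apply/setP => x; rewrite inE; have [d Dd ->] := Dtrans e x.
  exact: (mem_orbit 'P).
by [].
Qed.


Hypothesis reg : forall e : Q, 'C_(Inn' q)[e | 'P] = 1.

Lemma Duniq e d1 d2 : d1 \in Inn' q -> d2 \in Inn' q -> d1 e = d2 e -> d1 = d2.
Proof.
move=> D1 D2 E; apply/eqP; rewrite eq_mulgV1.
have : d1 * d2^-1 \in 'C_(Inn' q)[e | 'P].
  rewrite inE groupM ?groupV //=; apply/astab1P.
  by rewrite /= /aperm permM E permK.
by rewrite reg inE.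
Qed.

Lemma regular_GAlex e : exists f : {perm {perm Q}},
  [/\ f \in Aut (Inn' q), {in Inn' q, forall g, f g = g ^ Rop q e} &
      GAlex_iso q (Inn' q) f].
Proof.
have nRe : Rop q e \in 'N(Inn' q) by rewrite (subsetP nID) // mem_gen // imset_f.
exists (conj_aut (Inn' q) (Rop q e)); split.
- exact: Aut_aut.
- by move=> g Dg; rewrite norm_conj_autE.
pose phi a := odflt 1 [pick d in Inn' q | d e == a].
have phiP a : phi a \in Inn' q /\ phi a e = a.
  rewrite /phi; case: pickP => [d /andP[Dd /eqP]|none] //=.
  have [d Dd E] := Dtrans e a; have := none d; rewrite Dd -E eqxx //.
exists phi; split.
- by move=> a; case: (phiP a).
- by move=> a b E; case: (phiP a) => _ <-; case: (phiP b) => _ <-; rewrite E.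
- move=> y Dy; exists (y e); case: (phiP (y e)) => Dp Ep.
  exact: (Duniq Dp Dy Ep).
move=> a b; case: (phiP a) => Da Ea; case: (phiP b) => Db Eb.
have Dg : phi a * (phi b)^-1 \in Inn' q by rewrite groupM ?groupV.
case: (phiP (qop q a b)) => Dab Eab.
apply: (Duniq (e := e) Dab); first by rewrite groupM // norm_conj_autE // memJ_norm.
rewrite Eab norm_conj_autE // !permM.
have ee : (Rop q e)^-1 e = e.
  by apply: (@perm_inj _ (Rop q e)); rewrite permKV RopE qidem.
rewrite ee Ea RopE InnAut ?permKV ?Eb //.
exact: (subsetP DsubI).
Qed.

End Conn.

Local Close Scope group_scope.

Theorem mainTheorem11 (Q : finType) (q : quandle Q) :
  connected_quandle q ->
  [/\ is_GAlex q <->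
        (#|Q| = #|Inn' q| \/ forall e : Q, ('C_(Inn' q)[e | 'P] = 1)%g),
      #|Q| = #|Inn' q| <-> (forall e : Q, ('C_(Inn' q)[e | 'P] = 1)%g) &
      #|Q| = #|Inn' q| ->
        forall e : Q, exists f : {perm {perm Q}},
          [/\ f \in Aut (Inn' q),
              {in Inn' q, forall g, f g = (g ^ Rop q e)%g} &
              GAlex_iso q (Inn' q) f]].
Proof.
move=> conn.
have [e0 _] : exists e0 : Q, e0 \in [set: Q].
  move: conn; rewrite /connected_quandle /atrans => /imsetP[x Sx _]; by exists x.
have Qpos : (0 < #|Q|)%N by apply/card_gt0P; exists e0.
have B : #|Q| = #|Inn' q| <-> (forall e : Q, ('C_(Inn' q)[e | 'P] = 1)%g).
  split.
    move=> E e; apply/eqP; rewrite trivg_card1; apply/eqP.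
    have := card_stab conn e; rewrite -E -{2}(muln1 #|Q|) => /eqP.
    by rewrite eqn_mul2l eqn0Ngt Qpos => /eqP.
  by move=> R; rewrite -(card_stab conn e0) R cards1 muln1.
have C : #|Q| = #|Inn' q| -> forall e : Q, exists f : {perm {perm Q}},
          [/\ f \in Aut (Inn' q),
              {in Inn' q, forall g, f g = (g ^ Rop q e)%g} &
              GAlex_iso q (Inn' q) f].
  by move=> /B R e; apply: regular_GAlex.
split=> //; split.
  move=> [gT [G [f [fA [phi [phiG phiI phiS phiM]]]]]]; right.
  exact: (stab_triv fA phiG phiI phiS phiM).
move=> H; have E : #|Q| = #|Inn' q| by case: H => // /B.
have [f [fA _ iso]] := C E e0.
by exists _, (Inn' q), f.
Qed.
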